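(* Let $(\mathfrak g,[\cdot,\cdot,\cdot])$ be a Lie triple system, $(V;\rho)$ a representation of $\mathfrak g$, and $T:V\to\mathfrak g$ a linear map. Let $\Theta$ be the semidirect product bracket on $\mathfrak g\oplus V$ and $\Theta^T$ its twisting by $T$. Then $((\mathfrak g\oplus V,\Theta^T),\mathfrak g,V)$ is a twilled Lie triple system (i.e. $\mathfrak g$ and $V$ are subalgebras for $\Theta^T$) if and only if $T$ is a relative Rota–Baxter operator on $\mathfrak g$ with respect to $(V;\rho)$.
   Context: All vector spaces are over a field of characteristic $0$. A Lie triple system is a vector space with a trilinear bracket satisfying $[x,x,y]=0$, $[x,y,z]+[y,z,x]+[z,x,y]=0$ and $[x,y,[z,w,t]]=[[x,y,z],w,t]+[z,[x,y,w],t]+[z,w,[x,y,t]]$. A representation is a bilinear $\rho:\otimes^2\mathfrak g\to\mathfrak{gl}(V)$ with $D(x,y):=\rho(y,x)-\rho(x,y)$, satisfying $\rho(z,w)\rho(x,y)-\rho(y,w)\rho(x,z)-\rho(x,[y,z,w])+D(y,z)\rho(x,w)=0$ and $\rho([x,y,z],w)+\rho(z,[x,y,w])=[D(x,y),\rho(z,w)]$. The semidirect product bracket is $\Theta(x+u,y+v,z+w)=[x,y,z]+D(x,y)w+\rho(y,z)u-\rho(x,z)v$ ($x,y,z\in\mathfrak g$, $u,v,w\in V$), a Lie triple system on $\mathfrak g\oplus V$. A relative Rota–Baxter operator is a linear $T:V\to\mathfrak g$ with $[Tu,Tv,Tw]=T(D(Tu,Tv)w+\rho(Tv,Tw)u-\rho(Tu,Tw)v)$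 for all $u,v,w\in V$. Cochains and twisting: $C^p(\mathcal G,\mathcal G)=\mathrm{Hom}(\otimes^{2p+1}\mathcal G,\mathcal G)$, arguments $(\mathfrak X_1,\dots,\mathfrak X_p,x)$ with $\mathfrak X_i=x_i\otimes y_i$; for $P\in C^p,Q\in C^q$, $(P\circ Q)(\mathfrak X_1,\dots,\mathfrak X_{p+q},x)=\sum_{k=1}^p(-1)^{(k-1)q}\sum_{\sigma\in\mathbb S(k-1,q)}(-1)^\sigma P(\mathfrak X_{\sigma(1)},\dots,\mathfrak X_{\sigma(k-1)},Q(\mathfrak X_{\sigma(k)},\dots,\mathfrak X_{\sigma(k+q-1)},x_{k+q})\otimes y_{k+q},\mathfrak X_{k+q+1},\dots,x)+\sum_{k=1}^p(-1)^{(k-1)q}\sum_{\sigma\in\mathbb S(k-1,q)}(-1)^\sigma P(\mathfrak X_{\sigma(1)},\dots,\mathfrak X_{\sigma(k-1)},x_{k+q}\otimes Q(\mathfrak X_{\sigma(k)},\dots,\mathfrak X_{\sigma(k+q-1)},y_{k+q}),\mathfrak X_{k+q+1},\dots,x)+\sum_{\sigma\in\mathbb S(p,q)}(-1)^\sigma P(\mathfrak X_{\sigma(1)},\dots,\mathfrak X_{\sigma(p)},Q(\mathfrak X_{\sigma(p+1)},\dots,\mathfrak X_{\sigma(p+q)},x))$ and $[P,Q]_{\mathsf{LTS}}=P\circ Q-(-1)^{pq}Q\circ P$. With $\hat T\in C^0(\mathfrak g\oplus V,\mathfrak g\oplus V)$, $\hat T(x,u)=(Tu,0)$, and $X_{\hat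 T}(\cdot)=[\cdot,\hat T]_{\mathsf{LTS}}$, the twisting is $\Theta^T=\sum_{k\ge0}\frac1{k!}X_{\hat T}^k(\Theta)$ (finite sum). *)

(* Defs.v *)
From HB Require Import structures.
From mathcomp Require Import all_boot all_order all_algebra.
Set Implicit Arguments. Unset Strict Implicit. Unset Printing Implicit Defensive.
Import GRing.Theory.
Local Open Scope ring_scope.

Section LTS.
Variable K : fieldType.

Definition lin (U W : lmodType K) (f : U -> W) : Prop :=
  forall (a : K) (u v : U), f (a *: u + v) = a *: f u + f v.

Section Defs.
Variables (g V : lmodType K).
Variable br : g -> g -> g -> g.
Variable rho : g -> g -> V -> V.

Definition trilinear : Prop :=
  (forall y z, lin (fun x => br x y z)) /\
  (forall x z, lin (fun y => br x y z)) /\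
  (forall x y, lin (fun z => br x y z)).

Definition LTS : Prop :=
  [/\ trilinear,
      (forall x y, br x x y = 0),
      (forall x y z, br x y z + br y z x + br z x y = 0) &
      (forall x y z w t,
          br x y (br z w t) =
          br (br x y z) w t + br z (br x y w) t + br z w (br x y t))].

Definition Dop (x y : g) : V -> V := fun v => rho y x v - rho x y v.

Definition is_rep : Prop :=
  [/\ (forall y v, lin (fun x => rho x y v)),
      (forall x v, lin (fun y => rho x y v)),
      (forall x y, lin (rho x y)),
      (forall x y z w v,
          rho z w (rho x y v) - rho y w (rho x z v) - rho x (br y z w) v
          + Dop y z (rho x w v) = 0) &
      (forall x y z w v,
          rho (br x y z) w v + rho z (br x y w) v =
          Dop x y (rho z w v) - rho z w (Dop x y v))].

(* semidirect product bracket on g (+) V, as a 1-cochain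
   (a function of the argument list [:: a; b; c]) *)
Definition semidirect (s : seq (g * V)) : g * V :=
  let a := nth 0 s 0 in let b := nth 0 s 1 in let c := nth 0 s 2 in
  (br a.1 b.1 c.1,
   Dop a.1 b.1 c.2 + rho b.1 c.1 a.2 - rho a.1 c.1 b.2).

Definition hatT (T : V -> g) (s : seq (g * V)) : g * V :=
  (T (nth 0 s 0).2, 0).

Definition relRB (T : V -> g) : Prop :=
  forall u v w : V,
    br (T u) (T v) (T w) =
    T (Dop (T u) (T v) w + rho (T v) (T w) u - rho (T u) (T w) v).

End Defs.

Section Cochains.
Variable G : lmodType K.

(* A p-cochain is represented as a function on argument lists
   [:: x_1; y_1; ...; x_p; y_p; x] (2p+1 arguments). *)
Definition cochain := seq G -> G.

Fixpoint bitseqs (n : nat) : seq bitseq :=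
  if n is n'.+1 then [seq true :: b | b <- bitseqs n'] ++
                     [seq false :: b | b <- bitseqs n']
  else [:: [::]].

(* (a,b)-shuffles of {0,...,a+b-1}, each given as the list
   [:: sigma(0); ...; sigma(a+b-1)] *)
Definition shuffles (a b : nat) : seq (seq nat) :=
  [seq mask m (iota 0 (a + b)) ++ mask (map negb m) (iota 0 (a + b))
  | m <- bitseqs (a + b) & count id m == a].

(* number of inversions; the sign of sigma is (-1)^inv_count sigma *)
Fixpoint inv_count (l : seq nat) : nat :=
  if l is h :: t then count (fun x => x < h)%N t + inv_count t else 0%N.

Definition sgn (n : nat) : K := (-1) ^+ n.

Definition flat (ps : seq (G * G)) : seq G :=
  flatten [seq [:: pr.1; pr.2] | pr <- ps].

Definition circ (p q : nat) (P Q : cochain) : cochain := fun s =>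
  let X i := (nth 0 s (2 * i), nth 0 s (2 * i + 1)) in
  let xl := nth 0 s (2 * (p + q)) in
  let rest k := [seq X i | i <- iota (k + q).+1 (p + q - (k + q).+1)] in
  \sum_(k < p) \sum_(sg <- shuffles k q)
     (sgn (k * q + inv_count sg) *:
        P (flat (take k [seq X i | i <- sg])
           ++ flat [:: (Q (flat (drop k [seq X i | i <- sg])
                            ++ [:: (X (k + q)%N).1]), (X (k + q)%N).2)]
           ++ flat (rest k) ++ [:: xl]))
  + \sum_(k < p) \sum_(sg <- shuffles k q)
     (sgn (k * q + inv_count sg) *:
        P (flat (take k [seq X i | i <- sg])
           ++ flat [:: ((X (k + q)%N).1,
                        Q (flat (drop k [seq X i | i <- sg])
                            ++ [:: (X (k + q)%N).2]))]
           ++ flat (rest k) ++ [:: xl]))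
  + \sum_(sg <- shuffles p q)
     (sgn (inv_count sg) *:
        P (flat (take p [seq X i | i <- sg])
           ++ [:: Q (flat (drop p [seq X i | i <- sg]) ++ [:: xl])])).

Definition LTSbr (p q : nat) (P Q : cochain) : cochain := fun s =>
  circ p q P Q s - sgn (p * q) *: circ q p Q P s.

Definition Xop (p : nat) (That : cochain) (P : cochain) : cochain :=
  LTSbr p 0 P That.

(* twisting  P^T = sum_k 1/k! X_That^k (P), for P in C^p.
   X_That^k P = 0 for k > 2p+2 (That has image in g and kills g),
   so the finite sum over k < 2p+3 is the full sum. *)
Definition twist (p : nat) (That : cochain) (P : cochain) : cochain := fun s =>
  \sum_(k < (2 * p + 3)%N) ((k`!)%:R)^-1 *: iter k (Xop p That) P s.

End Cochains.

Definition twilled (g V : lmodType K) (Th : seq (g * V) -> g * V) : Prop :=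
  (forall x y z : g, (Th [:: (x, 0); (y, 0); (z, 0)]).2 = 0) /\
  (forall u v w : V, (Th [:: (0, u); (0, v); (0, w)]).1 = 0).

End LTS.

(* Main.v *)
Require Import Defs.
From mathcomp Require Import all_boot all_order all_algebra.
Local Open Scope ring_scope.
Import GRing.Theory.

Section AC.
Variable M : zmodType.
Definition sumI (env : seq M) (i0 : nat) (l : seq nat) : M :=
  foldl (fun acc i => acc + nth 0 env i) (nth 0 env i0) l.
Lemma foldl_sum env acc l :
  foldl (fun acc i => acc + nth 0 env i) acc l = acc + \sum_(i <- l) nth (0:M) env i.
Proof.
elim: l acc => [|j l IH] acc /=; first by rewrite big_nil addr0.
by rewrite IH big_cons addrA.
Qed.
Lemma sumI_perm env i0 l1 j0 l2 :
  perm_eq (i0 :: l1) (j0 :: l2) -> sumI env i0 l1 = sumI env j0 l2.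
Proof.
move=> P; rewrite /sumI !foldl_sum.
have E : \sum_(i <- i0 :: l1) nth (0:M) env i = \sum_(i <- j0 :: l2) nth (0:M) env i.
  by apply: perm_big.
by rewrite !big_cons in E.
Qed.
End AC.
Arguments sumI {M} env i0 l.
Arguments sumI_perm {M} env i0 l1 j0 l2.

Ltac idx x env :=
  lazymatch env with
  | (x :: _) => constr:(0%N)
  | (_ :: ?r) => let n := idx x r in constr:(S n)
  end.
Ltac reify e env :=
  lazymatch e with
  | ?a + ?b => let r := reify a env in
               let j := idx b env in
               lazymatch r with (?i0, ?l) => constr:((i0, rcons l j)) end
  | _ => let j := idx e env in constr:((j, @nil nat))
  end.
Ltac ac_solve env :=
  lazymatch goal with |- ?L = ?R =>
    let rl := reify L env in let rr := reify R env in
    lazymatch rl with (?i0, ?l1) => lazymatch rr with (?j0, ?l2) =>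
      change (sumI env i0 l1 = sumI env j0 l2); apply: sumI_perm; by []
    end end
  end.


Lemma XEgen (M N : zmodType) (f : N -> M) (fD : forall x y, f (x + y) = f x + f y)
  (bt : M) (e1 e2 e3 : N) :
  ((bt - f e3) + (bt - f e2) - f (e3 + e2)) + ((bt - f e3) + (bt - f e1) - f (e3 + e1))
  + ((bt - f e2) + (bt - f e1) - f (e2 + e1)) - f ((e3 + e2) + (e3 + e1) + (e2 + e1))
  = (bt - f (e3 + e1 + e2)) *+ 6.
Proof.
rewrite !fD !mulrS mulr0n addr0 !opprD !addrA.
ac_solve [:: bt; - f e1; - f e2; - f e3].
Qed.

Section Lin.
Variables (K : fieldType) (U W : lmodType K) (f : U -> W) (Hf : lin f).
Lemma lin0 : f 0 = 0.
Proof. have E := Hf 1 0 0; rewrite !scale1r addr0 in E.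
by apply: (@addrI _ (f 0)); rewrite addr0 -E. Qed.
Lemma linD u v : f (u + v) = f u + f v.
Proof. by have := Hf 1 u v; rewrite !scale1r. Qed.
Lemma linN u : f (- u) = - f u.
Proof. by have := Hf (-1) u 0; rewrite !scaleN1r addr0 lin0 addr0. Qed.
Lemma linB u v : f (u - v) = f u - f v.
Proof. by rewrite linD linN. Qed.
End Lin.

Section S.
Variables (K : fieldType) (g V : lmodType K).
Variables (br : g -> g -> g -> g) (rho : g -> g -> V -> V) (T : V -> g).
Hypothesis HL : LTS br.
Hypothesis HR : is_rep br rho.
Hypothesis HT : lin T.

Definition h (x : g * V) : g * V := hatT T [:: x].
Definition Th := semidirect br rho.
Definition Q k := iter k (Xop 1 (hatT T)) Th.

Lemma Xop_eq (P : seq (g * V) -> g * V) (a b c : g * V) :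
  Xop 1 (hatT T) P [:: a; b; c] =
  P [:: h a; b; c] + P [:: a; h b; c] + P [:: a; b; h c] - h (P [:: a; b; c]).
Proof.
rewrite /Xop /LTSbr /circ /= !big_ord1 /= /shuffles /= !big_cons !big_nil /=.
by rewrite /sgn /= !expr0 !scale1r !addr0 /= !big_ord0 !addr0 add0r.
Qed.

Lemma XQ k a b c : Q k.+1 [:: a; b; c] =
  Q k [:: h a; b; c] + Q k [:: a; h b; c] + Q k [:: a; b; h c] - h (Q k [:: a; b; c]).
Proof. by rewrite /Q iterS Xop_eq. Qed.

Lemma ThE a b c : Th [:: a; b; c] =
  (br a.1 b.1 c.1, Dop rho a.1 b.1 c.2 + rho b.1 c.1 a.2 - rho a.1 c.1 b.2).
Proof. by []. Qed.

Lemma br0l y z : br 0 y z = 0.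
Proof. by case: HL => [[H1 [H2 H3]] _ _ _]; exact (@lin0 _ _ _ _ (H1 y z)). Qed.
Lemma br0m x z : br x 0 z = 0.
Proof. by case: HL => [[H1 [H2 H3]] _ _ _]; exact (@lin0 _ _ _ _ (H2 x z)). Qed.
Lemma br0r x y : br x y 0 = 0.
Proof. by case: HL => [[H1 [H2 H3]] _ _ _]; exact (@lin0 _ _ _ _ (H3 x y)). Qed.
Lemma rho0l y v : rho 0 y v = 0.
Proof. by case: HR => [H1 H2 H3 _ _]; exact (@lin0 _ _ _ _ (H1 y v)). Qed.
Lemma rho0m x v : rho x 0 v = 0.
Proof. by case: HR => [H1 H2 H3 _ _]; exact (@lin0 _ _ _ _ (H2 x v)). Qed.
Lemma rho0r x y : rho x y 0 = 0.
Proof. by case: HR => [H1 H2 H3 _ _]; exact (@lin0 _ _ _ _ (H3 x y)). Qed.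
Lemma Dop0l y v : Dop rho 0 y v = 0.
Proof. by rewrite /Dop rho0l rho0m subr0. Qed.
Lemma Dop0m x v : Dop rho x 0 v = 0.
Proof. by rewrite /Dop rho0l rho0m subr0. Qed.
Lemma Dop0r x y : Dop rho x y 0 = 0.
Proof. by rewrite /Dop !rho0r subr0. Qed.
Lemma T0 : T 0 = 0. Proof. exact: (@lin0 _ _ _ _ HT). Qed.

Lemma pair0 : ((0 : g), (0 : V)) = 0. Proof. by []. Qed.
Lemma hg x : x.2 = 0 -> h x = 0.
Proof. by move=> E; rewrite /h /hatT /= E T0. Qed.
Lemma h0 : h 0 = 0. Proof. exact: hg. Qed.
Lemma hh x : h (h x) = 0. Proof. exact: hg. Qed.
Lemma pext (x y : g * V) : x.1 = y.1 -> x.2 = y.2 -> x = y.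
Proof. by case: x; case: y => /= ? ? ? ? -> ->. Qed.
Lemma hD x y : h (x + y) = h x + h y.
Proof. by apply: pext; rewrite /= ?(@linD _ _ _ _ HT) ?addr0. Qed.
Lemma hN x : h (- x) = - h x.
Proof. by apply: pext; rewrite /= ?(@linN _ _ _ _ HT) ?oppr0. Qed.
Lemma hB x y : h (x - y) = h x - h y.
Proof. by rewrite hD hN. Qed.

Lemma QZ k : forall p q, [/\ Q k [:: 0; p; q] = 0, Q k [:: p; 0; q] = 0 & Q k [:: p; q; 0] = 0].
Proof.
elim: k => [|k IH] p q.
  by rewrite /Q /= !ThE /= !(br0l, br0m, br0r, Dop0l, Dop0m, Dop0r, rho0l, rho0m, rho0r) !subr0 !addr0.
rewrite !XQ !h0.
have [A1 A2 A3] := IH p q.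
have [B1 B2 B3] := IH (h p) q.
have [C1 C2 C3] := IH p (h q).
by rewrite ?A1 ?A2 ?A3 ?B1 ?B2 ?B3 ?C1 ?C2 ?C3; split; rewrite h0 !addr0 subr0.
Qed.

Lemma QZ1 k p q : Q k [:: 0; p; q] = 0. Proof. by case: (QZ k p q). Qed.
Lemma QZ2 k p q : Q k [:: p; 0; q] = 0. Proof. by case: (QZ k p q). Qed.
Lemma QZ3 k p q : Q k [:: p; q; 0] = 0. Proof. by case: (QZ k p q). Qed.

Lemma GGG k p q r : p.2 = 0 -> q.2 = 0 -> r.2 = 0 -> Q k.+1 [:: p; q; r] = 0.
Proof.
move=> Ep Eq Er; elim: k => [|k IH].
  rewrite XQ (@hg _ Ep) (@hg _ Eq) (@hg _ Er) QZ1 QZ2 QZ3 !add0r hg ?oppr0 //.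
  by rewrite /Q /= Ep Eq Er Dop0r !rho0r subr0 addr0.
by rewrite XQ (@hg _ Ep) (@hg _ Eq) (@hg _ Er) QZ1 QZ2 QZ3 IH h0 !add0r oppr0.
Qed.

Lemma case1 x y z :
  (twist 1 (hatT T) Th [:: (x, 0); (y, 0); (z, 0)]).2 = 0.
Proof.
rewrite /twist big_ord_recl big1 ?addr0.
  by rewrite /= Dop0r !rho0r subr0 addr0 scaler0.
move=> i _; rewrite /bump /=.
by rewrite add0n -[Xop _ _ _ _]/(Q i.+1 _) GGG ?scaler0.
Qed.

Lemma Q2g12 k p q x : p.2 = 0 -> q.2 = 0 ->
  Q k.+1 [:: p; q; x] = Q k [:: p; q; h x] - h (Q k [:: p; q; x]).
Proof. by move=> Ep Eq; rewrite XQ (@hg _ Ep) (@hg _ Eq) QZ1 QZ2 !add0r. Qed.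
Lemma Q2g13 k p x q : p.2 = 0 -> q.2 = 0 ->
  Q k.+1 [:: p; x; q] = Q k [:: p; h x; q] - h (Q k [:: p; x; q]).
Proof. by move=> Ep Eq; rewrite XQ (@hg _ Ep) (@hg _ Eq) QZ1 QZ3 add0r addr0. Qed.
Lemma Q2g23 k x p q : p.2 = 0 -> q.2 = 0 ->
  Q k.+1 [:: x; p; q] = Q k [:: h x; p; q] - h (Q k [:: x; p; q]).
Proof. by move=> Ep Eq; rewrite XQ (@hg _ Ep) (@hg _ Eq) QZ2 QZ3 !addr0. Qed.
Lemma Q1g1 k p y z : p.2 = 0 ->
  Q k.+1 [:: p; y; z] = Q k [:: p; h y; z] + Q k [:: p; y; h z] - h (Q k [:: p; y; z]).
Proof. by move=> Ep; rewrite XQ (@hg _ Ep) QZ1 add0r. Qed.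
Lemma Q1g2 k y p z : p.2 = 0 ->
  Q k.+1 [:: y; p; z] = Q k [:: h y; p; z] + Q k [:: y; p; h z] - h (Q k [:: y; p; z]).
Proof. by move=> Ep; rewrite XQ (@hg _ Ep) QZ2 addr0. Qed.
Lemma Q1g3 k y z p : p.2 = 0 ->
  Q k.+1 [:: y; z; p] = Q k [:: h y; z; p] + Q k [:: y; h z; p] - h (Q k [:: y; z; p]).
Proof. by move=> Ep; rewrite XQ (@hg _ Ep) QZ3 addr0. Qed.

Section Pts.
Variables u v w : V.
Let a : g * V := (0, u).
Let b : g * V := (0, v).
Let c : g * V := (0, w).
Let A : g * V := (T u, 0).
Let B : g * V := (T v, 0).
Let C : g * V := (T w, 0).
Let beta := br (T u) (T v) (T w).
Let e3 := Dop rho (T u) (T v) w.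
Let e2 := - rho (T u) (T w) v.
Let e1 := rho (T v) (T w) u.
Let ha : h a = A. Proof. by []. Qed.
Let hb : h b = B. Proof. by []. Qed.
Let hc : h c = C. Proof. by []. Qed.
Let EA : A.2 = 0. Proof. by []. Qed.
Let EB : B.2 = 0. Proof. by []. Qed.
Let EC : C.2 = 0. Proof. by []. Qed.

Ltac thz := apply: pext; rewrite /Q /= ?(br0l, br0m, br0r, Dop0l, Dop0m, Dop0r, rho0l, rho0m, rho0r, subr0, addr0, add0r, sub0r) //.

Let T_ABC : Q 0 [:: A; B; C] = (beta, 0). Proof. by thz. Qed.
Let T_ABc : Q 0 [:: A; B; c] = (0, e3). Proof. by thz. Qed.
Let T_AbC : Q 0 [:: A; b; C] = (0, e2). Proof. by thz. Qed.
Let T_aBC : Q 0 [:: a; B; C] = (0, e1). Proof. by thz. Qed.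
Let T_Abc : Q 0 [:: A; b; c] = 0. Proof. by thz. Qed.
Let T_aBc : Q 0 [:: a; B; c] = 0. Proof. by thz. Qed.
Let T_abC : Q 0 [:: a; b; C] = 0. Proof. by thz. Qed.
Let T_abc : Q 0 [:: a; b; c] = 0. Proof. by thz. Qed.

Let Q1_ABc : Q 1 [:: A; B; c] = (beta - T e3, 0).
Proof. by rewrite Q2g12 // hc T_ABC T_ABc; apply: pext; rewrite /= ?subr0. Qed.
Let Q1_AbC : Q 1 [:: A; b; C] = (beta - T e2, 0).
Proof. by rewrite Q2g13 // hb T_ABC T_AbC; apply: pext; rewrite /= ?subr0. Qed.
Let Q1_aBC : Q 1 [:: a; B; C] = (beta - T e1, 0).
Proof. by rewrite Q2g23 // ha T_ABC T_aBC; apply: pext; rewrite /= ?subr0. Qed.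
Let Q2_ABc : Q 2 [:: A; B; c] = 0.
Proof. by rewrite Q2g12 // hc (GGG _ _ _ _ EA EB EC) Q1_ABc hg // subr0. Qed.
Let Q2_AbC : Q 2 [:: A; b; C] = 0.
Proof. by rewrite Q2g13 // hb (GGG _ _ _ _ EA EB EC) Q1_AbC hg // subr0. Qed.
Let Q2_aBC : Q 2 [:: a; B; C] = 0.
Proof. by rewrite Q2g23 // ha (GGG _ _ _ _ EA EB EC) Q1_aBC hg // subr0. Qed.
Let Q3_ABc : Q 3 [:: A; B; c] = 0.
Proof. by rewrite Q2g12 // hc (GGG _ _ _ _ EA EB EC) Q2_ABc h0 subr0. Qed.
Let Q3_AbC : Q 3 [:: A; b; C] = 0.
Proof. by rewrite Q2g13 // hb (GGG _ _ _ _ EA EB EC) Q2_AbC h0 subr0. Qed.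
Let Q3_aBC : Q 3 [:: a; B; C] = 0.
Proof. by rewrite Q2g23 // ha (GGG _ _ _ _ EA EB EC) Q2_aBC h0 subr0. Qed.

Let Q1_Abc : Q 1 [:: A; b; c] = (0, e3 + e2).
Proof. by rewrite Q1g1 // hb hc T_ABc T_AbC T_Abc h0 subr0; apply: pext; rewrite /= ?addr0. Qed.
Let Q1_aBc : Q 1 [:: a; B; c] = (0, e3 + e1).
Proof. by rewrite Q1g2 // ha hc T_ABc T_aBC T_aBc h0 subr0; apply: pext; rewrite /= ?addr0. Qed.
Let Q1_abC : Q 1 [:: a; b; C] = (0, e2 + e1).
Proof. by rewrite Q1g3 // ha hb T_AbC T_aBC T_abC h0 subr0; apply: pext; rewrite /= ?addr0. Qed.

Let Q2_Abc : Q 2 [:: A; b; c] = ((beta - T e3) + (beta - T e2) - T (e3 + e2), 0).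
Proof. by rewrite Q1g1 // hb hc Q1_ABc Q1_AbC Q1_Abc; apply: pext; rewrite /= ?addr0 ?subr0. Qed.
Let Q2_aBc : Q 2 [:: a; B; c] = ((beta - T e3) + (beta - T e1) - T (e3 + e1), 0).
Proof. by rewrite Q1g2 // ha hc Q1_ABc Q1_aBC Q1_aBc; apply: pext; rewrite /= ?addr0 ?subr0. Qed.
Let Q2_abC : Q 2 [:: a; b; C] = ((beta - T e2) + (beta - T e1) - T (e2 + e1), 0).
Proof. by rewrite Q1g3 // ha hb Q1_AbC Q1_aBC Q1_abC; apply: pext; rewrite /= ?addr0 ?subr0. Qed.
Let Q3_Abc : Q 3 [:: A; b; c] = 0.
Proof. by rewrite Q1g1 // hb hc Q2_ABc Q2_AbC Q2_Abc hg // !addr0 subr0. Qed.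
Let Q3_aBc : Q 3 [:: a; B; c] = 0.
Proof. by rewrite Q1g2 // ha hc Q2_ABc Q2_aBC Q2_aBc hg // !addr0 subr0. Qed.
Let Q3_abC : Q 3 [:: a; b; C] = 0.
Proof. by rewrite Q1g3 // ha hb Q2_AbC Q2_aBC Q2_abC hg // !addr0 subr0. Qed.

Let Q1_abc : Q 1 [:: a; b; c] = 0.
Proof. by rewrite XQ ha hb hc T_Abc T_aBc T_abC T_abc h0 !addr0 subr0. Qed.
Let Q2_abc : Q 2 [:: a; b; c] = (0, (e3 + e2) + (e3 + e1) + (e2 + e1)).
Proof. by rewrite XQ ha hb hc Q1_Abc Q1_aBc Q1_abC Q1_abc h0 subr0; apply: pext; rewrite /= ?addr0. Qed.
Let X := ((beta - T e3) + (beta - T e2) - T (e3 + e2)) + ((beta - T e3) + (beta - T e1) - T (e3 + e1))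
  + ((beta - T e2) + (beta - T e1) - T (e2 + e1)) - T ((e3 + e2) + (e3 + e1) + (e2 + e1)).
Let Q3_abc : Q 3 [:: a; b; c] = (X, 0).
Proof. by rewrite XQ ha hb hc Q2_Abc Q2_aBc Q2_abC Q2_abc; apply: pext; rewrite /= ?addr0 ?subr0. Qed.
Let Q4_abc : Q 4 [:: a; b; c] = 0.
Proof. by rewrite XQ ha hb hc Q3_Abc Q3_aBc Q3_abC Q3_abc hg // !addr0 sub0r oppr0. Qed.

Let XE : X = (beta - T (e3 + e1 + e2)) *+ 6.
Proof. rewrite /X; apply: XEgen; exact: (@linD _ _ _ _ HT). Qed.

Lemma case2 : [pchar K] =i pred0 ->
  (twist 1 (hatT T) Th [:: a; b; c]).1 = beta - T (e3 + e1 + e2).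
Proof.
move=> ch.
set s := [:: a; b; c].
have -> : twist 1 (hatT T) Th s = (0`!)%:R^-1 *: Q 0 s + ((1`!)%:R^-1 *: Q 1 s
  + ((2`!)%:R^-1 *: Q 2 s + ((3`!)%:R^-1 *: Q 3 s + ((4`!)%:R^-1 *: Q 4 s + 0)))).
  by rewrite /twist !big_ord_recl big_ord0.
rewrite /s T_abc Q1_abc Q2_abc Q3_abc Q4_abc /=.
rewrite !scaler0 !add0r !addr0 XE.
have -> : 3`! = 6%N by [].
rewrite -scaler_nat scalerA mulVf ?scale1r //.
by move/pcharf0P: ch => ->.
Qed.
End Pts.
End S.

Theorem proposition5p14 (K : fieldType) (g V : lmodType K)
  (br : g -> g -> g -> g) (rho : g -> g -> V -> V) (T : V -> g) :
  [pchar K] =i pred0 ->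
  LTS br -> is_rep br rho -> lin T ->
  (twilled (twist 1 (hatT T) (semidirect br rho)) <-> relRB br rho T).
Proof.
move=> ch HL HR HT; split.
  case=> _ H2 u v w; have := H2 u v w.
  rewrite (case2 _ _ _ _ _ _ HL HR HT u v w ch) => /eqP; rewrite subr_eq0 => /eqP.
  by [].
move=> RB; split=> [x y z|u v w]; first exact: (case1 _ _ _ _ _ _ HL HR HT).
by rewrite (case2 _ _ _ _ _ _ HL HR HT u v w ch) -RB subrr.
Qed.
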